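(* Let $(E\to M,\rho,\langle\cdot,\cdot\rangle,[\cdot,\cdot])$ be a Courant algebroid, let $\mathcal{G}$ be a generalized metric on $E$ with $V_\pm=\ker(\mathcal{G}\mp 1)$, and let $D$ be a generalized connection on $E$ that is metric, i.e. $D\mathcal{G}=0$. Then for all $a_\pm,b_\pm\in\Gamma(V_\pm)$, \[ \mathrm{Ric}_{\mathrm{SSCV}}(a_\mp,b_\pm)=2\,\mathrm{Ric}_{\mathrm{JV}}(a_\mp,b_\pm)=\mathrm{Ric}^\pm_{\mathrm{GF}}(a_\mp,b_\pm)+\mathrm{Ric}^\mp_{\mathrm{GF}}(b_\pm,a_\mp). \]
   Context: A Courant algebroid $(E\to M,\rho,\langle\cdot,\cdot\rangle,[\cdot,\cdot])$ consists of a vector bundle $E$, a nondegenerate symmetric bilinear form $\langle\cdot,\cdot\rangle$ on $E$, a bundle map $\rho:E\to TM$ and a bilinear bracket on $\Gamma(E)$ satisfying $[a,[b,c]]=[[a,b],c]+[b,[a,c]]$, $\mathcal{L}_{\rho a}\langle b,c\rangle=\langle[a,b],c\rangle+\langle b,[a,c]\rangle$, and $2[a,a]=\rho^*d\langle a,a\rangle$ (identifying $E^*\cong E$ via $\langle\cdot,\cdot\rangle$). A generalized connection is a linear operator $D:\Gamma(E)\to\Gamma(E^*\otimes E)$ with $D(fa)=fDa+\rho^*df\otimes a$ and $\rho^*d\langle a,b\rangle=\langle Da,b\rangle+\langle a,Db\rangle$; write $D_ba:=(Da)(b)$, and regard $Da$ as the endomorphism $b\mapsto D_ba$, with $(Da)^*$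 its adjoint with respect to $\langle\cdot,\cdot\rangle$. The naive curvature is $\mathcal{R}_0(a,b)c:=D_aD_bc-D_bD_ac-D_{[a,b]}c$. A generalized metric is an endomorphism $\mathcal{G}$ of $E$ with $\mathcal{G}^2=1$ and $\mathcal{G}$ self-adjoint for $\langle\cdot,\cdot\rangle$; $V_\pm:=\ker(\mathcal{G}\mp1)$, so $E=V_+\oplus V_-$ orthogonally, and $a_\pm:=\tfrac12(1\pm\mathcal{G})a$. $D$ is metric if $D_a(\Gamma(V_\pm))\subseteq\Gamma(V_\pm)$ for all $a$. For metric $D$, define $\mathrm{Ric}^\pm_{\mathrm{GF}}(a_\mp,b_\pm)$ as the trace of the endomorphism $V_\pm\to V_\pm$, $c_\pm\mapsto \mathcal{R}_0(c_\pm,a_\mp)b_\pm$. Define the tensor $\mathcal{R}_{\mathrm{JV}}$ by $\langle\mathcal{R}_{\mathrm{JV}}(a,b)c,e\rangle:=\tfrac12\big(\langle\mathcal{R}_0(a,b)c,e\rangle+\langle\mathcal{R}_0(c,e)a,b\rangle+\langle(Da)^*b,(Dc)^*e\rangle\big)$, and $\mathrm{Ric}_{\mathrm{JV}}(a,b)$ as the trace of the endomorphism $c\mapsto\mathcal{R}_{\mathrm{JV}}(c,a)b$ of $E$. Finally $\mathrm{Ric}_{\mathrm{SSCV}}(a,b):=\mathrm{Ric}_{\mathrm{JV}}(a,b)-\mathrm{Ric}_{\mathrm{JV}}(\mathcal{G}a,\mathcal{G}b)$. *)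

(* Defs.v *)
(* Algebraic (Serre--Swan style) rendering of Courant
   algebroids: functions on M are a commutative K-algebra A (K = R for
   C^oo(M)), sections of E are an A-module, vector fields are K-linear
   derivations of A. *)
From HB Require Import structures.
From mathcomp Require Import all_boot all_algebra.
Set Implicit Arguments. Unset Strict Implicit. Unset Printing Implicit Defensive.
Import GRing.Theory.
Local Open Scope ring_scope.

Section Courant.
Variables (K : numFieldType) (A : comUnitAlgType K) (E : lmodType A).

Definition is_derivation (X : A -> A) : Prop :=
  [/\ forall f g, X (f + g) = X f + X g,
      forall (k : K) f, X (k *: f) = k *: X f
    & forall f g, X (f * g) = f * X g + X f * g].

(* Data of a Courant algebroid on the section module E.  [fr]/[fr'] is a
   finite dual frame for the pairing: x = sum_i <x, fr' i> fr i.  Its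
   existence is equivalent to E being finitely generated projective with
   <.,.> nondegenerate (E ~ E^* via <.,.>). *)
Record CAdata := CAData {
  nfr : nat;
  fr  : 'I_nfr -> E;
  fr' : 'I_nfr -> E;
  anchor : E -> A -> A;
  form : E -> E -> A;
  brk : E -> E -> E
}.

Arguments fr : clear implicits.
Arguments fr' : clear implicits.
Variable C : CAdata.
Local Notation "<< a , b >>" := (form C a b).

(* rho^* d f, characterised by << rho^* d f , a >> = rho(a) f *)
Definition rhostar_d (f : A) : E :=
  \sum_i (anchor C (fr C i) f) *: fr' C i.

Definition courant_axioms : Prop :=
  (forall a, is_derivation (anchor C a)) /\
      (forall f a b g, anchor C (f *: a + b) g = f * anchor C a g + anchor C b g) /\
      (forall a b, << a, b >> = << b, a >>) /\
      (forall f a b c, << f *: a + b, c >> = f * << a, c >> + << b, c >>) /\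
      (forall x, x = \sum_i << x, fr' C i >> *: fr C i) /\
      (forall (k : K) a a' b, brk C (k%:A *: a + a') b = k%:A *: brk C a b + brk C a' b) /\
      (forall (k : K) a b b', brk C a (k%:A *: b + b') = k%:A *: brk C a b + brk C a b') /\
      (forall a b c, brk C a (brk C b c)
                     = brk C (brk C a b) c + brk C b (brk C a c)) /\
      (forall a b c, anchor C a << b, c >> = << brk C a b, c >> + << b, brk C a c >>) /\
      (forall a, brk C a a *+ 2 = rhostar_d << a, a >>).

(* Generalized connection, written Dc x y := D_x y = (D y)(x). *)
Definition gen_connection (Dc : E -> E -> E) : Prop :=
  [/\ (forall f x x' y, Dc (f *: x + x') y = f *: Dc x y + Dc x' y),
      (forall x y y', Dc x (y + y') = Dc x y + Dc x y'),
      (forall x f y, Dc x (f *: y) = f *: Dc x y + anchor C x f *: y)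
    & (forall c a b, anchor C c << a, b >> = << Dc c a, b >> + << a, Dc c b >>)].

Definition gen_metric (G : E -> E) : Prop :=
  [/\ (forall f a b, G (f *: a + b) = f *: G a + G b),
      (forall a, G (G a) = a)
    & (forall a b, << G a, b >> = << a, G b >>)].

Definition inV (G : E -> E) (s : bool) (a : E) : Prop :=
  G a = (if s then a else - a).

Definition proj (G : E -> E) (s : bool) (a : E) : E :=
  (2%:R)^-1 *: (if s then a + G a else a - G a).

Definition metric_conn (G : E -> E) (Dc : E -> E -> E) : Prop :=
  forall s a b, inV G s b -> inV G s (Dc a b).

Definition R0 (Dc : E -> E -> E) (a b c : E) : E :=
  Dc a (Dc b c) - Dc b (Dc a c) - Dc (brk C a b) c.

Definition trE (T : E -> E) : A := \sum_i << T (fr C i), fr' C i >>.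

(* trace of an endomorphism of V_s, via the dual frame (proj s fr, proj s fr') of V_s *)
Definition trV (G : E -> E) (s : bool) (T : E -> E) : A :=
  \sum_i << T (proj G s (fr C i)), proj G s (fr' C i) >>.

Definition RicGF (G : E -> E) (Dc : E -> E -> E) (s : bool) (a b : E) : A :=
  trV G s (fun c => R0 Dc c a b).

(* (D a)^* b : adjoint of the endomorphism c |-> D_c a *)
Definition Dadj (Dc : E -> E -> E) (a b : E) : E :=
  \sum_i << b, Dc (fr C i) a >> *: fr' C i.

(* << R_JV(a,b) c , e >> *)
Definition RJVpair (Dc : E -> E -> E) (a b c e : E) : A :=
  (2%:R)^-1 * (<< R0 Dc a b c, e >> + << R0 Dc c e a, b >>
               + << Dadj Dc a b, Dadj Dc c e >>).

Definition RicJV (Dc : E -> E -> E) (a b : E) : A :=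
  \sum_i RJVpair Dc (fr C i) a b (fr' C i).

Definition RicSSCV (G : E -> E) (Dc : E -> E -> E) (a b : E) : A :=
  RicJV Dc a b - RicJV Dc (G a) (G b).

End Courant.

(* Main.v *)
Require Import Defs.
From HB Require Import structures.
From mathcomp Require Import all_boot all_algebra.
From mathcomp Require Import ring.
Import GRing.Theory.
Local Open Scope ring_scope.
Set Implicit Arguments. Unset Strict Implicit.

Section Core.
Variables (K : numFieldType) (A : comUnitAlgType K) (E : lmodType A).
Variable C : CAdata E.
Hypothesis HC : courant_axioms C.

Local Notation "<< a , b >>" := (Defs.form C a b).
Local Notation rho := (anchor C).
Local Notation br := (brk C).
Local Notation x_ := (@fr _ _ _ C).
Local Notation xd := (@fr' _ _ _ C).

Lemma two_unit : (2%:R : A) \is a GRing.unit.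
Proof.
apply/unitrP; exists (((2%:R : K)^-1)%:A).
have -> : (2%:R : A) = in_alg A (2%:R : K) by rewrite rmorph_nat.
have h : (2%:R : K) != 0 by rewrite Num.Theory.pnatr_eq0.
by split; rewrite -in_algE -rmorphM /= ?mulVf ?mulfV // scale1r.
Qed.

Lemma half2 : (2%:R : A)^-1 * 2%:R = 1.
Proof. by rewrite mulVr // two_unit. Qed.

Lemma cancel2 (v w : E) : v *+ 2 = w *+ 2 -> v = w.
Proof.
move=> h; rewrite -[v]scale1r -[w]scale1r -half2 -!scalerA !scaler_nat h //.
Qed.

Lemma form_lin f x y z : << f *: x + y, z >> = f * << x, z >> + << y, z >>.
Proof. by case: HC => _ [_ [_ [H _]]]. Qed.
Lemma form_sym x y : << x, y >> = << y, x >>.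
Proof. by case: HC => _ [_ [H _]]. Qed.
Lemma form0l z : << 0, z >> = 0.
Proof.
have := form_lin 1 0 0 z; rewrite scaler0 addr0 mul1r => h.
by apply: (addrI (<< 0, z >>)); rewrite addr0 -h.
Qed.
Lemma formDl x y z : << x + y, z >> = << x, z >> + << y, z >>.
Proof. by rewrite -{1}[x]scale1r form_lin mul1r. Qed.
Lemma formZl f x z : << f *: x, z >> = f * << x, z >>.
Proof. by rewrite -[f *: x]addr0 form_lin form0l addr0. Qed.
Lemma formNl x z : << - x, z >> = - << x, z >>.
Proof. by rewrite -scaleN1r formZl mulN1r. Qed.
Lemma form0r z : << z, 0 >> = 0.
Proof. by rewrite form_sym form0l. Qed.
Lemma formDr x y z : << z, x + y >> = << z, x >> + << z, y >>.
Proof. by rewrite !(form_sym z) formDl. Qed.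
Lemma formZr f x z : << z, f *: x >> = f * << z, x >>.
Proof. by rewrite !(form_sym z) formZl. Qed.
Lemma formNr x z : << z, - x >> = - << z, x >>.
Proof. by rewrite !(form_sym z) formNl. Qed.
Lemma form_suml (I : Type) (r : seq I) (P : pred I) (F : I -> E) z :
  << \sum_(i <- r | P i) F i, z >> = \sum_(i <- r | P i) << F i, z >>.
Proof.
elim/big_rec2: _ => [|i y1 y2 _ <-]; first by rewrite form0l.
by rewrite formDl.
Qed.
Lemma form_sumr (I : Type) (r : seq I) (P : pred I) (F : I -> E) z :
  << z, \sum_(i <- r | P i) F i >> = \sum_(i <- r | P i) << z, F i >>.
Proof. by rewrite form_sym form_suml; apply: eq_bigr => i _; rewrite form_sym. Qed.

Definition formE := (formDl, formZl, formNl, form0l, formDr, formZr, formNr, form0r).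

Lemma frame x : x = \sum_i << x, xd i >> *: x_ i.
Proof. by case: HC => _ [_ [_ [_ [H _]]]]. Qed.

Lemma nondeg x y : (forall z, << x, z >> = << y, z >>) -> x = y.
Proof.
move=> h; rewrite (frame x) (frame y); apply: eq_bigr => i _; by rewrite h.
Qed.

Lemma frame' x : x = \sum_i << x, x_ i >> *: xd i.
Proof.
apply: nondeg => z; rewrite form_suml {1}(frame z) form_sumr.
apply: eq_bigr => i _; rewrite formZl formZr.
by rewrite [RHS]mulrC (form_sym (xd i)).
Qed.

Lemma via1 (R : comPzRingType) (l r a1 a2 k : R) :
  a1 = a2 -> l - r = k * (a1 - a2) -> l = r.
Proof. by move=> -> /eqP; rewrite subrr mulr0 subr_eq0 => /eqP. Qed.
Lemma via2 (R : comPzRingType) (l r a1 a2 b1 b2 k k' : R) :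
  a1 = a2 -> b1 = b2 -> l - r = k * (a1 - a2) + k' * (b1 - b2) -> l = r.
Proof. by move=> -> -> /eqP; rewrite !subrr !mulr0 addr0 subr_eq0 => /eqP. Qed.
Lemma via3 (R : comPzRingType) (l r a1 a2 b1 b2 c1 c2 k k' k'' : R) :
  a1 = a2 -> b1 = b2 -> c1 = c2 ->
  l - r = k * (a1 - a2) + k' * (b1 - b2) + k'' * (c1 - c2) -> l = r.
Proof. by move=> -> -> -> /eqP; rewrite !subrr !mulr0 !addr0 subr_eq0 => /eqP. Qed.

Lemma formMnl x z n : << x *+ n, z >> = << x, z >> *+ n.
Proof. by rewrite -scaler_nat formZl mulr_natl. Qed.

Lemma anch_der x : is_derivation (rho x).
Proof. by case: HC. Qed.
Lemma anchDr x f g : rho x (f + g) = rho x f + rho x g.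
Proof. by case: (anch_der x). Qed.
Lemma anchMr x f g : rho x (f * g) = f * rho x g + rho x f * g.
Proof. by case: (anch_der x). Qed.
Lemma anch0r x : rho x 0 = 0.
Proof.
have := anchDr x 0 0; rewrite addr0 => h.
by apply: (addrI (rho x 0)); rewrite addr0 -h.
Qed.
Lemma anchNr x f : rho x (- f) = - rho x f.
Proof.
apply: (addrI (rho x f)); by rewrite -anchDr !subrr anch0r.
Qed.
Lemma anch_lin f a b g : rho (f *: a + b) g = f * rho a g + rho b g.
Proof. by case: HC => _ [H _]. Qed.
Lemma anch0l g : rho 0 g = 0.
Proof.
have := anch_lin 1 0 0 g; rewrite scaler0 addr0 mul1r => h.
by apply: (addrI (rho 0 g)); rewrite addr0 -h.
Qed.
Lemma anchDl a b g : rho (a + b) g = rho a g + rho b g.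
Proof. by rewrite -{1}[a]scale1r anch_lin mul1r. Qed.
Lemma anchZl f a g : rho (f *: a) g = f * rho a g.
Proof. by rewrite -[f *: a]addr0 anch_lin anch0l addr0. Qed.
Lemma anchNl a g : rho (- a) g = - rho a g.
Proof. by rewrite -scaleN1r anchZl mulN1r. Qed.
Lemma anch_sum (I : Type) (r : seq I) (P : pred I) (F : I -> E) g :
  rho (\sum_(i <- r | P i) F i) g = \sum_(i <- r | P i) rho (F i) g.
Proof.
elim/big_rec2: _ => [|i y1 y2 _ <-]; first by rewrite anch0l.
by rewrite anchDl.
Qed.
Definition anchE := (anchDr, anchMr, anchNr, anch0r, anchDl, anchZl, anchNl, anch0l).

Local Notation rs := (rhostar_d C).

Lemma rs_pair f z : << rs f, z >> = rho z f.
Proof.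
rewrite /rhostar_d form_suml {2}(frame z) anch_sum.
by apply: eq_bigr => i _; rewrite formZl anchZl mulrC form_sym.
Qed.
Lemma rsD f g : rs (f + g) = rs f + rs g.
Proof. by apply: nondeg => z; rewrite formDl !rs_pair anchDr. Qed.
Lemma rsM f g : rs (f * g) = f *: rs g + g *: rs f.
Proof. apply: nondeg => z; rewrite !formE !rs_pair anchMr; ring. Qed.
Lemma rs0 : rs 0 = 0.
Proof. by apply: nondeg => z; rewrite rs_pair anch0r form0l. Qed.

Lemma brk_linl (k : K) a a' b : br (k%:A *: a + a') b = k%:A *: br a b + br a' b.
Proof. by case: HC => _ [_ [_ [_ [_ [H _]]]]]. Qed.
Lemma brk_linr (k : K) a b b' : br a (k%:A *: b + b') = k%:A *: br a b + br a b'.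
Proof. by case: HC => _ [_ [_ [_ [_ [_ [H _]]]]]]. Qed.
Lemma jacobi a b c : br a (br b c) = br (br a b) c + br b (br a c).
Proof. by case: HC => _ [_ [_ [_ [_ [_ [_ [H _]]]]]]]. Qed.
Lemma brk_inv a b c : rho a << b, c >> = << br a b, c >> + << b, br a c >>.
Proof. by case: HC => _ [_ [_ [_ [_ [_ [_ [_ [H _]]]]]]]]. Qed.
Lemma brk_sq a : br a a *+ 2 = rs << a, a >>.
Proof. by case: HC => _ [_ [_ [_ [_ [_ [_ [_ [_ H]]]]]]]]. Qed.

Lemma brkDl a a' b : br (a + a') b = br a b + br a' b.
Proof. by have := brk_linl 1 a a' b; rewrite !scale1r. Qed.
Lemma brkDr a b b' : br a (b + b') = br a b + br a b'.
Proof. by have := brk_linr 1 a b b'; rewrite !scale1r. Qed.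
Lemma brk0l b : br 0 b = 0.
Proof. have := brkDl 0 0 b; rewrite addr0 => h. by apply: (addrI (br 0 b)); rewrite addr0 -h. Qed.
Lemma brk0r b : br b 0 = 0.
Proof. have := brkDr b 0 0; rewrite addr0 => h. by apply: (addrI (br b 0)); rewrite addr0 -h. Qed.
Lemma brkNl a b : br (- a) b = - br a b.
Proof. by have := brk_linl (-1) a 0 b; rewrite !addr0 brk0l addr0 !scaleN1r. Qed.
Lemma brkNr a b : br a (- b) = - br a b.
Proof. by have := brk_linr (-1) a b 0; rewrite !addr0 brk0r addr0 !scaleN1r. Qed.

Lemma addKeq (R : zmodType) (a b c : R) : a = b + c -> b = a - c.
Proof. by move=> ->; rewrite addrK. Qed.

Lemma addKeq' (R : zmodType) (a b c : R) : b + c = a -> b = a - c.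
Proof. by move=> <-; rewrite addrK. Qed.

Lemma brkZr x f y : br x (f *: y) = f *: br x y + rho x f *: y.
Proof.
apply: nondeg => z.
rewrite (addKeq (brk_inv x (f *: y) z)) !formE (addKeq (brk_inv x y z)) anchMr; ring.
Qed.

Lemma brk_sym x y : br x y + br y x = rs << x, y >>.
Proof.
apply: cancel2; apply: nondeg => z.
have h := congr1 (fun v => << v, z >>) (brk_sq (x + y)).
have hx := congr1 (fun v => << v, z >>) (brk_sq x).
have hy := congr1 (fun v => << v, z >>) (brk_sq y).
move: h hx hy => /=; rewrite !formMnl !rs_pair !brkDl !brkDr !formE !anchE (form_sym y x) => h hx hy.
apply: (via3 h hx hy (k := 1) (k' := -1) (k'' := -1)). ring.
Qed.

Lemma brkZl f x y : br (f *: x) y = f *: br x y - rho y f *: x + << x, y >> *: rs f.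
Proof.
rewrite (addKeq' (brk_sym (f *: x) y)) brkZr formZl rsM.
apply: nondeg => z.
have h := congr1 (fun v => << v, z >>) (brk_sym x y).
move: h => /=; rewrite !formE => h.
apply: (via1 h (k := - f)); ring.
Qed.

Definition brkE := (brkDl, brkDr, brkNl, brkNr, brk0l, brk0r, brkZr, brkZl).

(* anchor is a bracket morphism, weakly *)
Definition delta x y g := rho x (rho y g) - rho y (rho x g) - rho (br x y) g.

Lemma delta_vec x y g (z : E) : delta x y g *: z = 0.
Proof.
apply: nondeg => w; rewrite form0l formZl.
have J := congr1 (fun v => << v, w >>) (jacobi x y (g *: z)).
have J0 := congr1 (fun v => << v, w >>) (jacobi x y z).
move: J J0 => /=; rewrite !brkE !formE => J J0.
rewrite /delta.
apply: (via2 J J0 (k := 1) (k' := - g)); ring.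
Qed.

Lemma deltaD x y u v : delta x y (u + v) = delta x y u + delta x y v.
Proof. rewrite /delta !anchE; ring. Qed.
Lemma deltaM x y u v : delta x y (u * v) = u * delta x y v + delta x y u * v.
Proof. rewrite /delta !anchE; ring. Qed.
Lemma delta0 x y : delta x y 0 = 0.
Proof. rewrite /delta !anchE; ring. Qed.
Lemma delta_sum x y (I : Type) (r : seq I) (P : pred I) (F : I -> A) :
  delta x y (\sum_(i <- r | P i) F i) = \sum_(i <- r | P i) delta x y (F i).
Proof.
elim/big_rec2: _ => [|i y1 y2 _ <-]; first by rewrite delta0.
by rewrite deltaD.
Qed.

Lemma delta_form x y z w : delta x y << z, w >> = 0.
Proof.
rewrite {1}(frame z) form_suml delta_sum big1 // => i _.
rewrite formZl deltaM.
have h1 : delta x y << x_ i, w >> * << z, xd i >> = 0.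
  by rewrite -formZl delta_vec form0l.
have h2 : delta x y << z, xd i >> * << x_ i, w >> = 0.
  by rewrite -formZl delta_vec form0l.
by rewrite mulrC h1 h2 addr0.
Qed.

Variable Dc : E -> E -> E.
Hypothesis HD : gen_connection C Dc.

Lemma D_lin1 f x x' y : Dc (f *: x + x') y = f *: Dc x y + Dc x' y.
Proof. by case: HD. Qed.
Lemma DDr x y y' : Dc x (y + y') = Dc x y + Dc x y'.
Proof. by case: HD. Qed.
Lemma DZr x f y : Dc x (f *: y) = f *: Dc x y + rho x f *: y.
Proof. by case: HD. Qed.
Lemma Dmet c a b : rho c << a, b >> = << Dc c a, b >> + << a, Dc c b >>.
Proof. by case: HD. Qed.
Lemma D0l y : Dc 0 y = 0.
Proof.
have := D_lin1 1 0 0 y; rewrite scaler0 addr0 scale1r => h.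
by apply: (addrI (Dc 0 y)); rewrite addr0 -h.
Qed.
Lemma DDl x x' y : Dc (x + x') y = Dc x y + Dc x' y.
Proof. by rewrite -{1}[x]scale1r D_lin1 scale1r. Qed.
Lemma DZl f x y : Dc (f *: x) y = f *: Dc x y.
Proof. by rewrite -[f *: x]addr0 D_lin1 D0l addr0. Qed.
Lemma DNl x y : Dc (- x) y = - Dc x y.
Proof. by rewrite -scaleN1r DZl scaleN1r. Qed.
Lemma D0r x : Dc x 0 = 0.
Proof.
have := DDr x 0 0; rewrite addr0 => h.
by apply: (addrI (Dc x 0)); rewrite addr0 -h.
Qed.
Lemma DNr x y : Dc x (- y) = - Dc x y.
Proof. by apply: (addrI (Dc x y)); rewrite -DDr !subrr D0r. Qed.
Lemma D_sum (I : Type) (r : seq I) (P : pred I) (F : I -> E) y :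
  Dc (\sum_(i <- r | P i) F i) y = \sum_(i <- r | P i) Dc (F i) y.
Proof.
elim/big_rec2: _ => [|i y1 y2 _ <-]; first by rewrite D0l.
by rewrite DDl.
Qed.
Definition DE := (DDl, DZl, DNl, D0l, DDr, DZr, DNr, D0r).

Local Notation Dadj := (Dadj C Dc).
Local Notation R0 := (Defs.R0 C Dc).

Lemma Dadj_pair c a z : << Dadj c a, z >> = << a, Dc z c >>.
Proof.
rewrite /Defs.Dadj form_suml.
transitivity (<< a, Dc (\sum_i << z, xd i >> *: x_ i) c >>); last by rewrite -frame.
rewrite D_sum form_sumr; apply: eq_bigr => i _.
by rewrite formZl DZl formZr mulrC form_sym.
Qed.

Lemma DadjDl c c' a : Dadj (c + c') a = Dadj c a + Dadj c' a.
Proof. apply: nondeg => z; rewrite formDl !Dadj_pair DDr formDr //. Qed.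
Lemma DadjZl f c a : Dadj (f *: c) a = f *: Dadj c a + << c, a >> *: rs f.
Proof.
apply: nondeg => z; rewrite !formE !Dadj_pair rs_pair DZr !formE (form_sym a c); ring.
Qed.
Lemma DadjDr c a a' : Dadj c (a + a') = Dadj c a + Dadj c a'.
Proof. apply: nondeg => z; rewrite formDl !Dadj_pair formDl //. Qed.
Lemma DadjZr f c a : Dadj c (f *: a) = f *: Dadj c a.
Proof. apply: nondeg => z; rewrite formZl !Dadj_pair formZl //. Qed.
Lemma DadjNl c a : Dadj (- c) a = - Dadj c a.
Proof. apply: nondeg => z; rewrite formNl !Dadj_pair DNr formNr //. Qed.
Lemma DadjNr c a : Dadj c (- a) = - Dadj c a.
Proof. apply: nondeg => z; rewrite formNl !Dadj_pair formNl //. Qed.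

Definition F a b c e :=
  << R0 c a b, e >> + << R0 b e c, a >> + << Dadj c a, Dadj b e >>.

Lemma FDl a b c c' e : F a b (c + c') e = F a b c e + F a b c' e.
Proof. rewrite /F /Defs.R0 !DadjDl !brkE !DE !formE; ring. Qed.
Lemma FDr a b c e e' : F a b c (e + e') = F a b c e + F a b c e'.
Proof. rewrite /F /Defs.R0 !DadjDr !brkE !DE !formE; ring. Qed.

Lemma delta_pair x y g c a : delta x y g * << c, a >> = 0.
Proof. by rewrite -formZl delta_vec form0l. Qed.

Lemma FZl a b f c e : F a b (f *: c) e = f * F a b c e.
Proof.
rewrite /F /Defs.R0 DadjZl !brkE !DE !formE (form_sym (rs f)) !Dadj_pair.
rewrite (form_sym e (Dc (rs f) b)).
apply: (via1 (delta_pair b e f c a) (k := 1)).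
rewrite /delta; ring.
Qed.

Lemma FZr a b f c e : F a b c (f *: e) = f * F a b c e.
Proof. rewrite /F /Defs.R0 DadjZr !brkE !DE !formE; ring. Qed.

Definition bil (H : E -> E -> A) :=
  (forall f c c' e, H (f *: c + c') e = f * H c e + H c' e) /\
  (forall f c e e', H c (f *: e + e') = f * H c e + H c e').

Section Bil.
Variable H : E -> E -> A.
Hypothesis HH : bil H.

Lemma bil0l e : H 0 e = 0.
Proof.
have := HH.1 1 0 0 e; rewrite scaler0 addr0 mul1r => h.
by apply: (addrI (H 0 e)); rewrite addr0 -h.
Qed.
Lemma bil0r c : H c 0 = 0.
Proof.
have := HH.2 1 c 0 0; rewrite scaler0 addr0 mul1r => h.
by apply: (addrI (H c 0)); rewrite addr0 -h.
Qed.
Lemma bil_suml (I : Type) (r : seq I) (P : pred I) (g : I -> A) (y : I -> E) e :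
  H (\sum_(i <- r | P i) g i *: y i) e = \sum_(i <- r | P i) g i * H (y i) e.
Proof.
elim/big_rec2: _ => [|i y1 y2 _ <-]; first by rewrite bil0l.
by rewrite HH.1.
Qed.
Lemma bil_sumr (I : Type) (r : seq I) (P : pred I) (g : I -> A) (y : I -> E) c :
  H c (\sum_(i <- r | P i) g i *: y i) = \sum_(i <- r | P i) g i * H c (y i).
Proof.
elim/big_rec2: _ => [|i y1 y2 _ <-]; first by rewrite bil0r.
by rewrite HH.2.
Qed.

Lemma bil_swap : \sum_i H (xd i) (x_ i) = \sum_i H (x_ i) (xd i).
Proof.
transitivity (\sum_i \sum_j << xd i, xd j >> * H (x_ j) (x_ i)).
  by apply: eq_bigr => i _; rewrite {1}(frame (xd i)) bil_suml.
rewrite exchange_big /=; apply: eq_bigr => j _.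
rewrite {2}(frame (xd j)) bil_sumr; apply: eq_bigr => i _.
by rewrite form_sym.
Qed.
End Bil.

Lemma lin_sum (Q : E -> E) (HQ : forall f u v, Q (f *: u + v) = f *: Q u + Q v)
  (I : Type) (r : seq I) (P : pred I) (g : I -> A) (y : I -> E) :
  Q (\sum_(i <- r | P i) g i *: y i) = \sum_(i <- r | P i) g i *: Q (y i).
Proof.
have Q0 : Q 0 = 0.
  have := HQ 1 0 0; rewrite scaler0 addr0 scale1r => h.
  by apply: (addrI (Q 0)); rewrite addr0 -h.
elim/big_rec2: _ => [|i y1 y2 _ <-]; by rewrite ?HQ.
Qed.

Lemma bil_cross (H : E -> E -> A) (P Q : E -> E) : bil H ->
  (forall f u v, Q (f *: u + v) = f *: Q u + Q v) ->
  (forall u v, << P u, v >> = << u, P v >>) ->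
  (forall u, Q (P u) = 0) ->
  \sum_i H (Q (x_ i)) (P (xd i)) = 0.
Proof.
move=> HH HQ HP HQP.
transitivity (\sum_i \sum_j << P (xd i), xd j >> * H (Q (x_ i)) (x_ j)).
  by apply: eq_bigr => i _; rewrite {1}(frame (P (xd i))) (bil_sumr HH).
rewrite exchange_big /=; apply: big1 => j _.
rewrite -(bil_suml HH) -lin_sum //.
have -> : \sum_i << P (xd i), xd j >> *: x_ i = P (xd j).
  rewrite [RHS](frame (P (xd j))); apply: eq_bigr => i _.
  by rewrite HP form_sym.
by rewrite HQP bil0l.
Qed.

Lemma bilF a b : bil (F a b).
Proof. by split=> *; rewrite ?FDl ?FZl ?FDr ?FZr. Qed.

Lemma R0_skew x y c a : << R0 x y c, a >> = - << c, R0 x y a >>.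
Proof.
rewrite /Defs.R0 !formE.
rewrite (addKeq (Dmet x (Dc y c) a)) (addKeq (Dmet y (Dc x c) a)).
rewrite (addKeq (Dmet (br x y) c a)).
rewrite (addKeq (Dmet y c a)) (addKeq (Dmet x c a)).
rewrite (addKeq (Dmet y c (Dc x a))) (addKeq (Dmet x c (Dc y a))).
rewrite !anchE.
apply: (via1 (delta_form x y c a) (k := 1)); rewrite /delta; ring.
Qed.

Lemma R0_anti x y a : << x, y >> = 0 -> R0 x y a = - R0 y x a.
Proof.
move=> h; have := brk_sym x y; rewrite h rs0 => hs.
have e : br x y = - br y x by apply/eqP; rewrite -addr_eq0 hs.
rewrite /Defs.R0 e DNl; apply: nondeg => z; rewrite !formE; ring.
Qed.

Lemma R0Zl f u y c : R0 (f *: u) y c = f *: R0 u y c - << u, y >> *: Dc (rs f) c.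
Proof. rewrite /Defs.R0; apply: nondeg => z; rewrite !brkE !DE !formE; ring. Qed.
Lemma R0Dl u v y c : R0 (u + v) y c = R0 u y c + R0 v y c.
Proof. rewrite /Defs.R0; apply: nondeg => z; rewrite !brkE !DE !formE; ring. Qed.

Section Proj.
Variables P M : E -> E.
Hypotheses (HPl : forall f u v, P (f *: u + v) = f *: P u + P v)
           (HMl : forall f u v, M (f *: u + v) = f *: M u + M v)
           (HPM : forall u, P u + M u = u)
           (HMP : forall u, M (P u) = 0) (HPM0 : forall u, P (M u) = 0)
           (HPs : forall u v, << P u, v >> = << u, P v >>)
           (HMs : forall u v, << M u, v >> = << u, M v >>)
           (HDP : forall z c, P c = c -> P (Dc z c) = Dc z c)
           (HDM : forall z c, M c = c -> M (Dc z c) = Dc z c).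

Lemma linD (Q : E -> E) : (forall f u v, Q (f *: u + v) = f *: Q u + Q v) ->
  forall u v, Q (u + v) = Q u + Q v.
Proof. by move=> HQ u v; rewrite -{1}[u]scale1r HQ scale1r. Qed.
Lemma linN (Q : E -> E) : (forall f u v, Q (f *: u + v) = f *: Q u + Q v) ->
  forall u, Q (- u) = - Q u.
Proof.
move=> HQ u; have Q0 : Q 0 = 0.
  have := HQ 1 0 0; rewrite scaler0 addr0 scale1r => h.
  by apply: (addrI (Q 0)); rewrite addr0 -h.
by rewrite -scaleN1r -[_ *: u]addr0 HQ Q0 addr0 scaleN1r.
Qed.

Lemma PP u : P (P u) = P u.
Proof. by rewrite -{2}(HPM u) (linD HPl) HPM0 addr0. Qed.
Lemma MM u : M (M u) = M u.
Proof. by rewrite -{2}(HPM u) (linD HMl) HMP add0r. Qed.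

Lemma orth u v : P u = u -> M v = v -> << u, v >> = 0.
Proof. by move=> hu hv; rewrite -hu -hv HPs HPM0 form0r. Qed.

Lemma R0P x y c : P c = c -> P (R0 x y c) = R0 x y c.
Proof.
move=> hc; rewrite /Defs.R0 !(linD HPl) !(linN HPl).
by rewrite !HDP // HDP.
Qed.
Lemma R0M x y c : M c = c -> M (R0 x y c) = R0 x y c.
Proof.
move=> hc; rewrite /Defs.R0 !(linD HMl) !(linN HMl).
by rewrite !HDM // HDM.
Qed.

Lemma split_tr H : bil H ->
  \sum_i H (x_ i) (xd i) = \sum_i H (P (x_ i)) (P (xd i)) + \sum_i H (M (x_ i)) (M (xd i)).
Proof.
move=> HH.
have Dl c c' e : H (c + c') e = H c e + H c' e by rewrite -{1}[c]scale1r HH.1 mul1r.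
have Dr c e e' : H c (e + e') = H c e + H c e' by rewrite -{1}[e]scale1r HH.2 mul1r.
transitivity (\sum_i (H (P (x_ i)) (P (xd i)) + H (M (x_ i)) (M (xd i))
               + (H (M (x_ i)) (P (xd i)) + H (P (x_ i)) (M (xd i))))).
  apply: eq_bigr => i _; rewrite -{1}(HPM (x_ i)) -{1}(HPM (xd i)) !Dl !Dr.
  ring.
rewrite !big_split /= (bil_cross HH HMl HPs HMP) (bil_cross HH HPl HMs HPM0) !addr0 //.
Qed.

Variables a b : E.
Hypotheses (Ha : M a = a) (Hb : P b = b).

Definition Hm c e := << R0 (M c) b a, M e >>.

Lemma bilHm : bil Hm.
Proof.
split=> f c c' e; rewrite /Hm.
  rewrite HMl R0Dl R0Zl !formE (form_sym (M c) b) (orth Hb (MM c)); ring.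
by rewrite HMl !formE; ring.
Qed.

Lemma core :
  \sum_i F a b (x_ i) (xd i) =
  \sum_i << R0 (P (x_ i)) a b, P (xd i) >> + \sum_i << R0 (M (x_ i)) b a, M (xd i) >>.
Proof.
rewrite (split_tr (bilF a b)); congr (_ + _).
  apply: eq_bigr => i _; rewrite /F.
  set c := P (x_ i); set e := P (xd i).
  have hc : P c = c by rewrite PP.
  have he : P e = e by rewrite PP.
  have -> : << R0 b e c, a >> = 0 by rewrite orth // R0P.
  have -> : Dadj c a = 0.
    by apply: nondeg => z; rewrite Dadj_pair form0l form_sym orth // HDP.
  by rewrite form0l !addr0.
transitivity (\sum_i Hm (xd i) (x_ i)); last by rewrite (bil_swap bilHm).
apply: eq_bigr => i _; rewrite /F /Hm.
set c := M (x_ i); set e := M (xd i).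
have hc : M c = c by rewrite MM.
have he : M e = e by rewrite MM.
have -> : << R0 c a b, e >> = 0 by rewrite orth // R0P.
have -> : Dadj b e = 0.
  by apply: nondeg => z; rewrite Dadj_pair form0l form_sym orth // HDP.
rewrite form0r add0r addr0 R0_skew R0_anti; last by rewrite orth.
by rewrite formNr opprK form_sym.
Qed.
End Proj.

Lemma RicJV_F a b : RicJV C Dc a b = \sum_i (2%:R)^-1 * F a b (x_ i) (xd i).
Proof. by []. Qed.

Lemma two_RicJV a b : 2%:R * RicJV C Dc a b = \sum_i F a b (x_ i) (xd i).
Proof.
rewrite RicJV_F mulr_sumr; apply: eq_bigr => i _.
by rewrite mulrA mulrV ?two_unit // mul1r.
Qed.

Lemma FNl a b c e : F (- a) b c e = - F a b c e.
Proof. rewrite /F /Defs.R0 DadjNr !brkE !DE !formE; ring. Qed.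
Lemma FNr a b c e : F a (- b) c e = - F a b c e.
Proof. rewrite /F /Defs.R0 DadjNl !brkE !DE !formE; ring. Qed.

Lemma RicJV_Nl a b : RicJV C Dc (- a) b = - RicJV C Dc a b.
Proof.
rewrite !RicJV_F -sumrN; apply: eq_bigr => i _; by rewrite FNl mulrN.
Qed.
Lemma RicJV_Nr a b : RicJV C Dc a (- b) = - RicJV C Dc a b.
Proof.
rewrite !RicJV_F -sumrN; apply: eq_bigr => i _; by rewrite FNr mulrN.
Qed.

End Core.


Section Metric.
Variables (K : numFieldType) (A : comUnitAlgType K) (E : lmodType A).
Variable C : CAdata E.
Hypothesis HC : courant_axioms C.
Variable G : E -> E.
Hypothesis HG : gen_metric C G.
Local Notation "<< a , b >>" := (Defs.form C a b).

Lemma G_lin f u v : G (f *: u + v) = f *: G u + G v.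
Proof. by case: HG. Qed.
Lemma GG u : G (G u) = u.
Proof. by case: HG. Qed.
Lemma G_sa u v : << G u, v >> = << u, G v >>.
Proof. by case: HG. Qed.
Lemma GD u v : G (u + v) = G u + G v.
Proof. exact: (linD G_lin). Qed.
Lemma GN u : G (- u) = - G u.
Proof. exact: (linN G_lin). Qed.
Lemma G0 : G 0 = 0.
Proof. have := GD 0 0; rewrite addr0 => h. by apply: (addrI (G 0)); rewrite addr0 -h. Qed.
Lemma GZ f u : G (f *: u) = f *: G u.
Proof. by rewrite -[f *: u]addr0 G_lin G0 addr0. Qed.
Definition GE := (GD, GN, GZ, GG).

Lemma proj_lin s f u v : proj G s (f *: u + v) = f *: proj G s u + proj G s v.
Proof.
apply: (nondeg HC) => z; case: s; rewrite /proj ?GE !(formE HC); ring.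
Qed.
Lemma proj_sum s u : proj G s u + proj G (~~ s) u = u.
Proof.
apply: (nondeg HC) => z.
have h := @half2 K A; case: s; rewrite /proj ?GE !(formE HC). all: apply: (via1 h (k := << u, z >>)). all: set t := (_^-1 : A). all: ring.
Qed.
Lemma proj_zero s u : proj G (~~ s) (proj G s u) = 0.
Proof.
apply: (nondeg HC) => z; case: s; rewrite /proj ?GE !(formE HC); ring.
Qed.
Lemma proj_sa s u v : << proj G s u, v >> = << u, proj G s v >>.
Proof.
case: s; rewrite /proj !(formE HC) G_sa; ring.
Qed.
Lemma proj_inV s c : proj G s c = c -> inV G s c.
Proof.
move=> h; rewrite /inV; apply: (nondeg HC) => z.
have hz := congr1 (fun v => << v, z >>) h.
have h2 := @half2 K A.
clear h; move: hz; case: s; rewrite /proj /= !(formE HC) => hz.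
  apply: (via2 hz h2 (k := 2%:R) (k' := - (<< c, z >> + << G c, z >>))); set t := (_^-1 : A); ring.
apply: (via2 hz h2 (k := - 2%:R) (k' := << c, z >> - << G c, z >>)); set t := (_^-1 : A); ring.
Qed.
Lemma inV_proj s c : inV G s c -> proj G s c = c.
Proof.
rewrite /inV /proj => h; apply: (nondeg HC) => z.
have h2 := @half2 K A.
case: s h => /= ->; rewrite ?opprK !(formE HC);
  apply: (via1 h2 (k := << c, z >>)); set t := (_^-1 : A); ring.
Qed.
End Metric.

Theorem theorem2p4 (K : numFieldType) (A : comUnitAlgType K) (E : lmodType A)
  (C : @CAdata K A E) (G : E -> E) (Dc : E -> E -> E) :
  courant_axioms C -> gen_metric C G -> gen_connection C Dc ->
  metric_conn G Dc ->
  forall (s : bool) (a b : E), inV G (~~ s) a -> inV G s b ->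
    RicSSCV C G Dc a b = 2%:R * RicJV C Dc a b /\
    2%:R * RicJV C Dc a b = RicGF C G Dc s a b + RicGF C G Dc (~~ s) b a.
Proof.
move=> HC HG HD HM s a b Ha Hb; split.
  rewrite /RicSSCV mulr_natl mulr2n.
  move: Ha Hb; case: s; rewrite /inV /= => -> ->.
    by rewrite (RicJV_Nl HC HD) opprK.
  by rewrite (RicJV_Nr HC HD) opprK.
rewrite (two_RicJV C Dc).
rewrite /RicGF /trV.
apply: (core HC HD (P := proj G s) (M := proj G (~~ s))).
- have h := proj_lin HC HG s. exact h.
- have h := proj_lin HC HG (~~ s). exact h.
- have h := proj_sum HC G s. exact h.
- have h := proj_zero HC HG s. exact h.
- by move=> u; have := proj_zero HC HG (~~ s) u; rewrite negbK.
- have h := proj_sa HC HG s. exact h.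
- have h := proj_sa HC HG (~~ s). exact h.
- move=> z c /(proj_inV HC) h; exact: (inV_proj HC (HM _ _ _ h)).
- exact: (inV_proj HC Ha).
- exact: (inV_proj HC Hb).
Qed.
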